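(* Assume (AS1) and (AS2) below. Then the set $$\mathcal{C}=\Big\{\xi=(\xi_0,\xi_1,\dots,\xi_L)\in\mathbb{R}^{L+1}\;:\;\exists\,p\in\mathcal{P}\ \text{with}\ v(p)\ge \xi_0\ \text{and}\ u_i(p)\ge \xi_i+c_i\ \text{for all } i=1,\dots,L\Big\}$$ is convex.
   Context: Setting. Fix an integer $L\ge 1$ and a constant $P_{\max}>0$. A random channel matrix $H$ takes values in a set $\mathcal{H}\subseteq\mathbb{R}^{L\times L}$ and has distribution $\mu$ on the Borel $\sigma$-algebra of $\mathcal{H}$. $\mathbb{E}$ denotes expectation with respect to $\mu$. A power policy is a Borel-measurable map $p:\mathcal{H}\to\mathbb{R}^L$, $p(H)=(p_1(H),\dots,p_L(H))$. Fix a measurable ''selection pattern'' $\sigma:\mathcal{H}\to\{0,1\}^L$. (In the paper, $\sigma_i(H)=\mathbb{1}(p^\star_i(H)>0)$ is the zero/non-zero pattern of an optimal policy $p^\star$.) Define the feasible policy set $$\mathcal{P}=\{p \text{ measurable}: p(H)\in[0,P_{\max}]^L \text{ and } \mathbb{1}(p_i(H)>0)=\sigma_i(H)\ \text{for all } i \text{ and all } H\in\mathcal{H}\}.$$ Assume $\rho_i:=\mu(\{H:\sigma_i(H)=1\})>0$ for every $i$. Let $f_0:\mathbb{R}^L\times\mathbb{R}^{L\times L}\to\mathbb{R}^L$ and $f_{c,i}:\mathbb{R}^L\times\mathbb{R}^{L\times L}\to\mathbb{R}$ for $i=1,\dots,L$ be measurable. Assume that for every $p\in\mathcal{P}$ the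 functions $H\mapsto f_0(p(H),H)$ and $H\mapsto f_{c,i}(p(H),H)$ are $\mu$-integrable. Let $g:\mathbb{R}^L\to\mathbb{R}$. For $p\in\mathcal{P}$, define $$v(p)=g\big(\mathbb{E}[f_0(p(H),H)]\big),\qquad u_i(p)=\mathbb{E}\big[f_{c,i}(p(H),H)\,\big|\,p_i(H)>0\big]=\frac{1}{\rho_i}\int_{\{\sigma_i=1\}} f_{c,i}(p(H),H)\,d\mu.$$ Here $\mathbb{E}$ of a vector is taken componentwise. The constants $c_1,\dots,c_L\ge 0$ are fixed. Assumptions. (AS1) $\mu$ is non-atomic. (AS2) $g$ is concave and non-decreasing (componentwise). *)

(* Defs.v *)
From HB Require Import structures.
From mathcomp Require Import all_boot all_order all_algebra.
From mathcomp Require Import all_classical all_reals all_analysis.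
Set Implicit Arguments. Unset Strict Implicit. Unset Printing Implicit Defensive.
Import Order.TTheory GRing.Theory Num.Theory.
Local Open Scope classical_set_scope.
Local Open Scope ring_scope.

Definition nonatomic d (T : measurableType d) (R : realType)
  (mu : set T -> \bar R) : Prop :=
  forall A : set T, measurable A -> (0 < mu A)%E ->
    exists B : set T, [/\ measurable B, B `<=` A & (0 < mu B < mu A)%E].

Definition concave_vec (R : realType) (L : nat) (g : ('I_L -> R) -> R) : Prop :=
  forall (x y : 'I_L -> R) (t : R), 0 <= t <= 1 ->
    t * g x + (1 - t) * g y <= g (fun i => t * x i + (1 - t) * y i).

Definition nondecreasing_vec (R : realType) (L : nat) (g : ('I_L -> R) -> R) : Prop :=
  forall x y : 'I_L -> R, (forall i, x i <= y i) -> g x <= g y.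

(* measurability of a map T -> R^L (Borel on R^L = product sigma-algebra) *)
Definition measurable_policy d (T : measurableType d) (R : realType) (L : nat)
  (p : T -> 'I_L -> R) : Prop :=
  forall i : 'I_L, measurable_fun setT (fun h => p h i).

Definition feasible d (T : measurableType d) (R : realType) (L : nat)
  (Pmax : R) (sigma : T -> 'I_L -> bool) (p : T -> 'I_L -> R) : Prop :=
  [/\ measurable_policy p,
      (forall h i, 0 <= p h i <= Pmax) &
      (forall h i, (0 < p h i) = sigma h i)].

Definition vobj d (T : measurableType d) (R : realType) (L : nat)
  (mu : probability T R) (g : ('I_L -> R) -> R)
  (f0 : ('I_L -> R) -> T -> 'I_L -> R) (p : T -> 'I_L -> R) : R :=
  g (fun i => Rintegral mu setT (fun h => f0 (p h) h i)).

Definition ucon d (T : measurableType d) (R : realType) (L : nat)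
  (mu : probability T R) (sigma : T -> 'I_L -> bool)
  (fc : 'I_L -> ('I_L -> R) -> T -> R) (p : T -> 'I_L -> R) (i : 'I_L) : R :=
  (fine (mu [set h | sigma h i]))^-1 *
    Rintegral mu [set h | sigma h i] (fun h => fc i (p h) h).

(* the set C in R^{L+1}; coordinate 0 is xi_0, coordinate lift ord0 i is xi_i *)
Definition regionC d (T : measurableType d) (R : realType) (L : nat)
  (mu : probability T R) (Pmax : R) (sigma : T -> 'I_L -> bool)
  (f0 : ('I_L -> R) -> T -> 'I_L -> R) (fc : 'I_L -> ('I_L -> R) -> T -> R)
  (g : ('I_L -> R) -> R) (c : 'I_L -> R) : set ('I_L.+1 -> R) :=
  [set xi | exists p, [/\ feasible Pmax sigma p,
      xi ord0 <= vobj mu g f0 p &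
      forall i : 'I_L, xi (lift ord0 i) + c i <= ucon mu sigma fc p i]].

Definition convex_vset (R : realType) (n : nat) (C : set ('I_n -> R)) : Prop :=
  forall x y (t : R), C x -> C y -> 0 <= t <= 1 ->
    C (fun k => t * x k + (1 - t) * y k).

(* Main.v *)
Require Import Defs.
From HB Require Import structures.
From mathcomp Require Import all_boot all_order all_algebra.
From mathcomp Require Import all_classical all_reals all_analysis.
From mathcomp Require Import ring lra.
Import Order.TTheory GRing.Theory Num.Theory.
Import numFieldNormedType.Exports.
Local Open Scope classical_set_scope.
Local Open Scope ring_scope.
Section Conv.
Local Set Implicit Arguments.
Local Unset Strict Implicit.
Context (R : realType).

Definition conv (u : nat -> R) (l : R) :=
  forall e, 0 < e -> exists N, forall n, (N <= n)%N -> `|u n - l| < e.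

Lemma eq_eps (a b : R) : (forall e, 0 < e -> `|a - b| < e) -> a = b.
Proof.
move=> H; apply/eqP; rewrite -subr_eq0; apply/negPn/negP => hne.
have := H `|a - b|; rewrite normr_gt0 hne => /(_ isT).
by rewrite ltxx.
Qed.

Lemma conv_uniq u a b : conv u a -> conv u b -> a = b.
Proof.
move=> ha hb; apply: eq_eps => e e0.
have e20 : 0 < e / 2 by rewrite divr_gt0.
have [N1 h1] := ha _ e20; have [N2 h2] := hb _ e20.
have := h1 (maxn N1 N2) (leq_maxl _ _); have := h2 (maxn N1 N2) (leq_maxr _ _).
set x := u _ => h2' h1'.
have -> : a - b = (x - b) - (x - a) by ring.
apply: (le_lt_trans (ler_normB _ _)).
by rewrite (splitr e) ltrD.
Qed.

Lemma conv_le u l c : conv u l -> (forall n, u n <= c) -> l <= c.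
Proof.
move=> hu hc; rewrite leNgt; apply/negP => hlc.
have lc0 : 0 < l - c by rewrite subr_gt0.
have [N hN] := hu _ lc0.
have := hN N (leqnn N); have := hc N.
rewrite ltr_norml => uc /andP [h1 _]; lra.
Qed.

Lemma conv_squeeze u l v : conv v 0 -> (forall n, `|u n - l| <= v n) -> conv u l.
Proof.
move=> hv h e e0; have [N hN] := hv e e0; exists N => n Nn.
apply: le_lt_trans (h n) _; have := hN n Nn; rewrite subr0.
by apply: le_lt_trans; exact: ler_norm.
Qed.

Lemma conv_ext u v l : (forall n, u n = v n) -> conv u l -> conv v l.
Proof. by move=> e h x x0; have [N hN] := h x x0; exists N => n /hN; rewrite e. Qed.

Lemma cvg_conv (u : nat -> R) (l : R) : u n @[n --> \oo] --> l -> conv u l.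
Proof.
move=> /cvgrPdist_lt h e e0; have := h e e0.
case=> N _ hN; exists N => n Nn; rewrite distrC; exact: hN.
Qed.

Lemma conv_geo c : conv (fun n => (2^-1)^+n * c) 0.
Proof.
apply: cvg_conv.
have := @cvg_geometric R c (2^-1).
rewrite ger0_norm ?invr_ge0 // invf_lt1 ?ltr1n // => /(_ isT).
by apply: cvg_trans; apply: near_eq_cvg; near=> n; rewrite /geometric mulrC.
Unshelve. all: end_near.
Qed.

Lemma conv_cst_add u l a : conv u l -> conv (fun n => a + u n) (a + l).
Proof. by move=> h e e0; have [N hN] := h e e0; exists N => n /hN; rewrite opprD addrACA subrr add0r. Qed.

End Conv.
Section Good.
Local Set Implicit Arguments.
Local Unset Strict Implicit.
Context d (T : measurableType d) (R : realType) (mu : probability T R).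

Definition mm (A : set T) : R := fine (mu A).

Lemma mmE A : measurable A -> mu A = (mm A)%:E.
Proof. by move=> mA; rewrite /mm fineK // fin_num_measure. Qed.

Lemma mm_ge0 A : 0 <= mm A.
Proof. by rewrite /mm fine_ge0. Qed.

Lemma mm_le1 A : measurable A -> mm A <= 1.
Proof. by move=> mA; rewrite -lee_fin -mmE // probability_le1. Qed.

Lemma mmU A B : measurable A -> measurable B -> A `&` B = set0 ->
  mm (A `|` B) = mm A + mm B.
Proof.
move=> mA mB AB; apply: EFin_inj; rewrite EFinD -!mmE ?measureU //.
exact: measurableU.
Qed.

Lemma mm_le A B : measurable A -> measurable B -> A `<=` B -> mm A <= mm B.
Proof.
move=> mA mB AB; rewrite -lee_fin -!mmE //; apply: le_measure => //; by rewrite inE.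
Qed.

Lemma mm0 : mm set0 = 0.
Proof. by rewrite /mm measure0. Qed.

Definition good (nu : set T -> R) :=
  (forall A B, measurable A -> measurable B -> A `&` B = set0 ->
     nu (A `|` B) = nu A + nu B) /\
  (forall e, 0 < e -> exists2 del, 0 < del &
     forall A, measurable A -> mm A < del -> `|nu A| < e).

Lemma good_mm : good mm.
Proof.
split; first exact: mmU.
move=> e e0; exists e => // A mA; rewrite ger0_norm //; exact: mm_ge0.
Qed.

Lemma good_int (f : T -> R) S : mu.-integrable setT (EFin \o f) -> measurable S ->
  good (fun A => Rintegral mu (A `&` S) f).
Proof.
move=> intf mS; split.
  move=> A B mA mB AB; rewrite setIUl Rintegral_setU //.
  - exact: measurableI.
  - exact: measurableI.
  - apply: integrableS intf => //; apply: measurableU; exact: measurableI.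
  - apply/eqP; rewrite setIACA AB set0I //.
move=> e e0; have [del [del0 hdel]] := integral_normr_continuous intf e0.
exists del => // A mA mA_del.
have mAS : measurable (A `&` S) by exact: measurableI.
apply: le_lt_trans (le_normr_Rintegral _ _) _ => //.
  exact: integrableS intf.
apply: hdel => //; have h := @mmE _ mAS; rewrite [X in (X < _)%E]h lte_fin; apply: le_lt_trans mA_del.
apply: mm_le => //; exact: subIsetl.
Qed.

Lemma good_D nu A B : good nu -> measurable A -> measurable B -> B `<=` A ->
  nu (A `\` B) = nu A - nu B.
Proof.
move=> [hU _] mA mB BA.
have -> : nu A = nu (B `|` (A `\` B)) by rewrite setDUK.
rewrite hU //; first by ring.
- exact: measurableD.
- by rewrite setDE setICA setICr setI0.
Qed.

Lemma good0 nu : good nu -> nu set0 = 0.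
Proof.
move=> [hU _]; have := hU set0 set0 measurable0 measurable0 (setI0 _).
rewrite setU0 => h; lra.
Qed.

Lemma incr_sub (D : nat -> set T) : (forall n, D n `<=` D n.+1) ->
  forall n m, (n <= m)%N -> D n `<=` D m.
Proof.
move=> incD n m; elim: m => [|m IH]; first by rewrite leqn0 => /eqP ->.
rewrite leq_eqVlt => /orP [/eqP -> //|]; rewrite ltnS => nm.
exact: subset_trans (IH nm) (incD m).
Qed.

Lemma conv_mm (D : nat -> set T) : (forall n, measurable (D n)) ->
  (forall n, D n `<=` D n.+1) -> conv (fun n => mm (D n)) (mm (\bigcup_n D n)).
Proof.
move=> mD incD; apply: cvg_conv.
have mU : measurable (\bigcup_n D n) by exact: bigcup_measurable.
apply: (@fine_cvg _ _ _ _ (mu \o D)); rewrite -mmE //.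
apply: nondecreasing_cvg_mu => //.
move=> n m nm; rewrite subsetEset; exact: (incr_sub incD nm).
Qed.

End Good.
Section Sierp.
Local Set Implicit Arguments.
Local Unset Strict Implicit.
Context d (T : measurableType d) (R : realType) (mu : probability T R).
Local Notation mm := (@mm d T R mu).

Lemma conv_good nu (D : nat -> set T) : good mu nu -> (forall n, measurable (D n)) ->
  (forall n, D n `<=` D n.+1) -> conv (fun n => nu (D n)) (nu (\bigcup_n D n)).
Proof.
move=> gnu mD incD e e0.
have mU : measurable (\bigcup_n D n) by exact: bigcup_measurable.
have [del del0 hdel] := gnu.2 e e0.
have [N hN] := conv_mm mu mD incD del0.
exists N => n Nn.
have sub : D n `<=` \bigcup_n D n by exact: bigcup_sup.
have h1 := good_D gnu mU (mD n) sub.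
have h2 := good_D (good_mm mu) mU (mD n) sub.
have -> : nu (D n) - nu (\bigcup_n0 D n0) = - nu (\bigcup_n D n `\` D n) by rewrite h1; ring.
rewrite normrN; apply: hdel; first exact: measurableD.
rewrite h2; have := hN n Nn; rewrite distrC => h.
apply: le_lt_trans h; exact: ler_norm.
Qed.

Context (nonat : nonatomic mu).

Lemma small E : measurable E -> 0 < mm E -> forall n : nat,
  exists B, [/\ measurable B, B `<=` E, 0 < mm B & mm B * 2 ^+ n <= mm E].
Proof.
move=> mE E0; elim => [|n [B [mB BE B0 Bn]]].
  by exists E; split => //; rewrite expr0 mulr1.
have := nonat mB; rewrite (mmE mu mB) lte_fin => /(_ B0) [C [mC CB]].
rewrite (mmE mu mC) !lte_fin => /andP [C0 CltB].
have [C2|C2] := leP (mm C * 2) (mm B).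
  exists C; split => //; first exact: subset_trans CB BE.
  by apply: le_trans Bn; rewrite exprS mulrA ler_wpM2r // exprn_ge0.
exists (B `\` C); split.
- exact: measurableD.
- by move=> x [/BE].
- by rewrite (good_D (good_mm mu) mB mC CB) subr_gt0.
- rewrite (good_D (good_mm mu) mB mC CB); apply: le_trans Bn.
  rewrite exprS mulrA ler_wpM2r ?exprn_ge0 //; lra.
Qed.

Lemma nat_le_pow2 (n : nat) : n%:R <= (2 : R) ^+ n.
Proof.
have := ltn_expl n (ltnSn 1); move/ltnW; rewrite -(ler_nat R) natrX //.
Qed.

Lemma small2 E eps : measurable E -> 0 < mm E -> 0 < eps ->
  exists B, [/\ measurable B, B `<=` E, 0 < mm B & mm B < eps].
Proof.
move=> mE E0 eps0.
have q0 : 0 <= mm E / eps by rewrite divr_ge0 // ?ltW.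
set n := Num.Def.archi_bound (mm E / eps).
have hn := archi_boundP q0.
have [B [mB BE B0 Bn]] := small mE E0 n.
exists B; split => //.
have hp := nat_le_pow2 n.
have p0 : 0 < (2:R) ^+ n by rewrite exprn_gt0.
have : mm E / eps < 2 ^+ n by apply: lt_le_trans hn hp.
rewrite ltr_pdivrMr // => h.
rewrite -(ltr_pM2r p0); apply: le_lt_trans Bn _; by rewrite mulrC.
Qed.

End Sierp.
Section Sierp2.
Local Set Implicit Arguments.
Local Unset Strict Implicit.
Context d (T : measurableType d) (R : realType) (mu : probability T R).
Local Notation mm := (@mm d T R mu).
Context (nonat : nonatomic mu).

Lemma sierpinski E : measurable E ->
  exists F, [/\ measurable F, F `<=` E & mm F = 2^-1 * mm E].
Proof.
move=> mE; set tau := 2^-1 * mm E.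
have tau0 : 0 <= tau by rewrite mulr_ge0 ?invr_ge0 ?mm_ge0.
have tauE : tau <= mm E by rewrite /tau; have := mm_ge0 mu E; lra.
pose cand F B := [/\ measurable B, B `<=` E `\` F & mm F + mm B <= tau].
have hstep : forall F, exists B, measurable F -> mm F <= tau ->
    cand F B /\ forall B', cand F B' -> mm B' <= 2 * mm B.
  move=> F; have [[mF Ft]|nF] := pselect (measurable F /\ mm F <= tau); last first.
    by exists set0 => mF Ft; exfalso; apply: nF.
  pose S := [set x | exists B, cand F B /\ x = mm B].
  have c0 : cand F set0 by split => //; rewrite mm0 addr0.
  have hS : has_sup S.
    split; first by exists 0; exists set0; rewrite mm0.
    by exists 1 => x [B [[mB _ _] ->]]; exact: mm_le1.
  have [s0|s0] := leP (sup S) 0.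
    exists set0 => _ _; split => // B' cB'; rewrite mm0 mulr0.
    apply: le_trans s0; apply: sup_upper_bound => //; by exists B'.
  have s20 : 0 < sup S / 2 by rewrite divr_gt0.
  have [x [B [cB ->]] hx] := sup_adherent s20 hS.
  exists B => _ _; split => // B' cB'.
  have : mm B' <= sup S by apply: sup_upper_bound => //; exists B'.
  lra.
have hs : forall F, {B | measurable F -> mm F <= tau ->
    cand F B /\ forall B', cand F B' -> mm B' <= 2 * mm B}.
  move=> F; exact: cid (hstep F).
pose Fs := fix Fs n := if n is n'.+1 then Fs n' `|` proj1_sig (hs (Fs n')) else set0.
have inv : forall n, [/\ measurable (Fs n), Fs n `<=` E & mm (Fs n) <= tau].
  elim => [|n [mF FE Ft]]; first by rewrite /Fs /=; split => //; rewrite mm0.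
  have [[mB BE Bt] _] := proj2_sig (hs (Fs n)) mF Ft.
  have dis : Fs n `&` proj1_sig (hs (Fs n)) = set0.
    by apply/seteqP; split => // x [xF /BE [_]].
  split => /=.
  - exact: measurableU.
  - by move=> x [/FE //|/BE []].
  - by rewrite mmU.
have incF : forall n, Fs n `<=` Fs n.+1 by move=> n x /= Fx; left.
have mFs : forall n, measurable (Fs n) by move=> n; have [] := inv n.
set F := \bigcup_n Fs n.
have mF : measurable F by exact: bigcup_measurable.
have FE : F `<=` E by move=> x [n _]; have [_ h _] := inv n; exact: h.
exists F; split => //.
have cv := conv_mm mu mFs incF.
have Fle : mm F <= tau by apply: (conv_le cv) => n; have [] := inv n.
apply/eqP; rewrite eq_le Fle /=; rewrite leNgt; apply/negP => Flt.
have FsF : forall n, Fs n `<=` F by move=> n; exact: bigcup_sup.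
have mEF : measurable (E `\` F) by exact: measurableD.
have EF0 : 0 < mm (E `\` F).
  rewrite (good_D (good_mm mu) mE mF FE); lra.
have tF0 : 0 < tau - mm F by rewrite subr_gt0.
have [B [mB BEF B0 Bt]] := small2 nonat mEF EF0 tF0.
have grow : forall n, mm B <= 2 * mm (proj1_sig (hs (Fs n))).
  move=> n; have [mFn _ Fnt] := inv n.
  have [_ h] := proj2_sig (hs (Fs n)) mFn Fnt; apply: h; split => //.
    by move=> x /BEF [xE xF]; split => // xFn; apply: xF; exact: FsF xFn.
  have : mm (Fs n) <= mm F by apply: mm_le => //; exact: FsF.
  lra.
have lb : forall n, n%:R * (mm B / 2) <= mm (Fs n).
  elim => [|n IH]; first by rewrite mul0r mm_ge0.
  have [mFn _ Fnt] := inv n.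
  have [[mBn BnE _] _] := proj2_sig (hs (Fs n)) mFn Fnt.
  have dis : Fs n `&` proj1_sig (hs (Fs n)) = set0.
    by apply/seteqP; split => // x [xF /BnE [_]].
  rewrite /= mmU // -natr1 mulrDl mul1r; have := grow n; lra.
have q0 : 0 <= 2 / mm B by rewrite divr_ge0 // ltW.
have hn := archi_boundP q0.
set n := Num.Def.archi_bound (2 / mm B) in hn.
have := lb n; have [_ _ hnt] := inv n.
have : 2 < n%:R * mm B by rewrite -ltr_pdivrMr.
have := mm_le1 mu mE; lra.
Qed.

End Sierp2.
Section Chain.
Local Set Implicit Arguments.
Local Unset Strict Implicit.
Context d (T : measurableType d) (R : realType) (mu : probability T R).
Local Notation mm := (@mm d T R mu).

Definition halvable (l : list (set T -> R)) :=
  forall E, measurable E -> exists F, [/\ measurable F, F `<=` E &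
    forall nu, List.In nu l -> nu F = 2^-1 * nu E].

Lemma halv_sub l1 l2 : (forall nu, List.In nu l2 -> List.In nu l1) ->
  halvable l1 -> halvable l2.
Proof.
move=> s h E mE; have [F [mF FE hF]] := h E mE.
by exists F; split => // nu /s /hF.
Qed.

Lemma halv_fun l : halvable l -> {hv : set T -> set T | forall E, measurable E ->
  [/\ measurable (hv E), hv E `<=` E & forall nu, List.In nu l -> nu (hv E) = 2^-1 * nu E]}.
Proof.
move=> h.
have h' : forall E, exists F, measurable E -> [/\ measurable F, F `<=` E &
    forall nu, List.In nu l -> nu F = 2^-1 * nu E].
  move=> E; have [mE|nE] := pselect (measurable E); last by exists set0.
  by have [F hF] := h E mE; exists F.
by exists (fun E => proj1_sig (cid (h' E))) => E mE; exact: (proj2_sig (cid (h' E)) mE).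
Qed.

Lemma chain l : halvable l -> (forall nu, List.In nu l -> good mu nu) ->
  forall E t, measurable E -> 0 <= t <= 1 ->
  exists A, [/\ measurable A, A `<=` E & forall nu, List.In nu l -> nu A = t * nu E].
Proof.
move=> hl gl E t mE t01.
have [hv hvP] := halv_fun hl.
pose w (n : nat) : R := (2^-1)^+n.
pose st := fix st n := if n is n'.+1 then
   (let p := st n' in let X := hv p.1.2 in
    if w n'.+1 <= p.2 then (p.1.1 `|` X, p.1.2 `\` X, p.2 - w n'.+1)
    else (p.1.1, p.1.2 `\` X, p.2)) else (set0, E, t).
have w0 : forall n, 0 <= w n by move=> n; rewrite /w exprn_ge0 // invr_ge0.
have wS : forall n, w n.+1 = 2^-1 * w n by move=> n; rewrite /w exprS.
have inv : forall n, [/\ measurable (st n).1.1, measurable (st n).1.2,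
     (st n).1.1 `<=` E, (st n).1.2 `<=` E & (st n).1.1 `&` (st n).1.2 = set0] /\
     (0 <= (st n).2 <= w n) /\
     forall nu, List.In nu l -> nu (st n).1.2 = w n * nu E /\
        nu (st n).1.1 = (t - (st n).2) * nu E.
  elim => [|n [[mA mR AE RE AR] [s01 hnu]]].
    rewrite /=; split; first by split => //; rewrite set0I.
    split; first by rewrite /w expr0.
    move=> nu /gl gnu; rewrite (good0 gnu) subrr mul0r /w expr0 mul1r; split => //.
  have [mX XR hX] := hvP _ mR.
  have mRX : measurable ((st n).1.2 `\` hv (st n).1.2) by exact: measurableD.
  rewrite /=; case: ifP => hw /=.
  - split; [split => // |split].
    + exact: measurableU.
    + by move=> x [/AE|/XR/RE].
    + by move=> x [/RE].
    + apply/seteqP; split => // x [[xA|xX] [xR nX]] //.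
      by move: AR; rewrite -subset0 => /(_ x); apply; split.
    + by move/andP: s01 => [s0 s1]; rewrite wS in hw *; apply/andP; split; lra.
    + move=> nu lnu; have gnu := gl _ lnu; have [h1 h2] := hnu _ lnu.
      rewrite (good_D gnu mR mX XR) hX // h1 wS; split; first by field.
      rewrite gnu.1 //; last first.
        apply/seteqP; split => // x [xA /XR xR].
        by move: AR; rewrite -subset0 => /(_ x); apply; split.
      by rewrite hX // h1 h2 ?wS; field.
  - split; [split => // |split].
    + by move=> x [/RE].
    + apply/seteqP; split => // x [xA [xR _]].
      by move: AR; rewrite -subset0 => /(_ x); apply; split.
    + by move/andP: s01 => [s0 s1]; move/negbT: hw; rewrite -ltNge wS => hw; apply/andP; split; lra.
    + move=> nu lnu; have gnu := gl _ lnu; have [h1 h2] := hnu _ lnu.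
      rewrite (good_D gnu mR mX XR) hX // h1 wS; split => //; by field.
set An := fun n => (st n).1.1.
have mAn : forall n, measurable (An n) by move=> n; have [[]] := inv n.
have incA : forall n, An n `<=` An n.+1.
  move=> n x; rewrite /An /=; case: ifP => _ //=; by left.
exists (\bigcup_n An n); split.
- exact: bigcup_measurable.
- by move=> x [n _]; have [[_ _ h _ _] _] := inv n; apply: h.
move=> nu lnu; have gnu := gl _ lnu.
apply: (conv_uniq (conv_good gnu mAn incA)).
apply: (conv_squeeze (conv_geo `|nu E|)) => n.
have [_ [/andP [s0 s1] hn]] := inv n.
rewrite /An (hn _ lnu).2 -mulrBl (_ : t - (st n).2 - t = - (st n).2); last by ring.
by rewrite normrM normrN (ger0_norm s0); apply: ler_wpM2r.
Qed.

End Chain.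
Section Helpers.
Local Set Implicit Arguments.
Local Unset Strict Implicit.
Context (R : realType).

Definition betw (a b x : R) := ((a <= x) && (x <= b)) || ((b <= x) && (x <= a)).

Lemma betw_split a b m x : betw a b x -> ~~ betw a m x -> betw m b x.
Proof.
rewrite /betw; case: (leP a x); case: (leP x b); case: (leP b x); case: (leP x a);
  case: (leP m x); case: (leP x m) => //= *; lra.
Qed.

Lemma betw_sub a b c x : betw a b x -> betw (a - c) (b - c) (x - c).
Proof. by rewrite /betw !lerD2r. Qed.

Lemma betw_eq a a' b b' x : a = a' -> b = b' -> betw a b x -> betw a' b' x.
Proof. by move=> -> ->. Qed.

Lemma betw_norm a b x : betw a b x -> `|x| <= `|a| + `|b|.
Proof.
have := ler_norm a; have := ler_norm (-a); have := ler_norm b; have := ler_norm (-b).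
rewrite !normrN => h1 h2 h3 h4.
rewrite /betw ler_norml => /orP [] /andP [] *; apply/andP; split; lra.
Qed.

Lemma betw_mid a b : betw a b (2^-1 * (a + b)).
Proof. by rewrite /betw; case: (leP a b) => h; apply/orP; [left|right]; apply/andP; split; lra. Qed.

Lemma disj_sub (T : Type) (A B A' B' : set T) : A `&` B = set0 -> A' `<=` A -> B' `<=` B ->
  A' `&` B' = set0.
Proof.
move=> AB sA sB; apply/seteqP; split => // x [/sA xA /sB xB].
by rewrite -AB; split.
Qed.

Lemma disjU (T : Type) (A B C : set T) : A `&` C = set0 -> B `&` C = set0 ->
  (A `|` B) `&` C = set0.
Proof. by move=> h1 h2; rewrite setIUl h1 h2 setU0. Qed.

Lemma disjD (T : Type) (X P : set T) : X `&` (P `\` X) = set0.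
Proof. by apply/seteqP; split => // x [xX [_ /(_ xX)]]. Qed.

End Helpers.
Section Step.
Local Set Implicit Arguments.
Local Unset Strict Implicit.
Context d (T : measurableType d) (R : realType) (mu : probability T R).
Local Notation mm := (@mm d T R mu).

Lemma halv_step l g : halvable l -> (forall nu, List.In nu l -> good mu nu) ->
  List.In mm l -> good mu g -> halvable (g :: l).
Proof.
move=> hl gl lmm gg E mE.
have [hv hvP] := halv_fun hl.
pose w (n : nat) : R := (2^-1)^+n.
have w0 : forall n, 0 <= w n by move=> n; rewrite /w exprn_ge0 // invr_ge0.
have wS : forall n, w n.+1 = 2^-1 * w n by move=> n; rewrite /w exprS.
pose st := fix st n := if n is n'.+1 then
  (let p := st n' in let P1 := hv p.1.1.2 in let P2 := p.1.1.2 `\` P1 in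
   let Q1 := hv p.1.2 in let Q2 := p.1.2 `\` Q1 in
   if betw (g p.1.1.2) (g P2 + g Q1) p.2 then (p.1.1.1 `|` P2, P1, Q1, p.2 - g P2)
   else (p.1.1.1 `|` Q1, P2, Q2, p.2 - g Q1))
  else (set0, hv E, E `\` hv E, 2^-1 * g E).
have inv : forall n, let D := (st n).1.1.1 in let P := (st n).1.1.2 in
    let Q := (st n).1.2 in let tau := (st n).2 in
  [/\ measurable D, measurable P, measurable Q, D `<=` E & P `|` Q `<=` E] /\
  [/\ D `&` P = set0, D `&` Q = set0 & P `&` Q = set0] /\
  (forall nu, List.In nu l -> [/\ nu P = nu Q, nu P = w n.+1 * nu E &
       nu D = 2^-1 * nu E - nu P]) /\
  (g D + tau = 2^-1 * g E /\ betw (g P) (g Q) tau).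
  elim => [|n].
    have [mX XE hX] := hvP _ mE.
    have mEX : measurable (E `\` hv E) by exact: measurableD.
    rewrite /=; split; first by split => //; move=> x [/XE|[]].
    split; first by split; rewrite ?set0I ?disjD.
    split.
      move=> nu lnu; have gnu := gl _ lnu.
      rewrite (good_D gnu mE mX XE) hX // (good0 gnu) /w expr1; split => //; by field.
    rewrite (good0 gg) add0r; split => //.
    rewrite (good_D gg mE mX XE).
    have := betw_mid (g (hv E)) (g E - g (hv E)).
    rewrite (_ : g (hv E) + (g E - g (hv E)) = g E) //; ring.
  move=> /=.
  move: (st n) => [[[D P] Q] tau] /= [[mD mP mQ DE PQE] [[DP DQ PQ] [hnu [hg hb]]]].
  have [mP1 P1P hP1] := hvP _ mP.
  have [mQ1 Q1Q hQ1] := hvP _ mQ.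
  have mP2 : measurable (P `\` hv P) by exact: measurableD.
  have mQ2 : measurable (Q `\` hv Q) by exact: measurableD.
  have P2P : P `\` hv P `<=` P by move=> x [].
  have Q2Q : Q `\` hv Q `<=` Q by move=> x [].
  have gP2 := good_D gg mP mP1 P1P.
  have gQ2 := good_D gg mQ mQ1 Q1Q.
  have PE : P `<=` E by move=> x Px; apply: PQE; left.
  have QE : Q `<=` E by move=> x Qx; apply: PQE; right.
  case: ifP => hw /=.
  - have dDP2 : D `&` (P `\` hv P) = set0 by exact: disj_sub DP _ P2P.
    split.
      split => //; first exact: measurableU.
      + by move=> x [/DE|/P2P/PE].
      + by move=> x [/P1P/PE|/Q1Q/QE].
    split.
      split.
      + apply: disjU; first exact: disj_sub DP _ P1P.
        by rewrite setIC disjD.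
      + apply: disjU; first exact: disj_sub DQ _ Q1Q.
        exact: disj_sub PQ P2P Q1Q.
      + exact: disj_sub PQ P1P Q1Q.
    split.
      move=> nu lnu; have gnu := gl _ lnu; have [h1 h2 h3] := hnu _ lnu.
      rewrite gnu.1 // (good_D gnu mP mP1 P1P) hP1 // hQ1 // h3 -h1 h2 !wS.
      split; by field.
    split; first by rewrite gg.1 // gP2; move: hg; lra.
    have h := betw_sub (g (P `\` hv P)) hw.
    by apply: (betw_eq _ _ h); rewrite gP2; ring.
  - have dDQ1 : D `&` hv Q = set0 by exact: disj_sub DQ _ Q1Q.
    split.
      split => //; first exact: measurableU.
      + by move=> x [/DE|/Q1Q/QE].
      + by move=> x [/P2P/PE|/Q2Q/QE].
    split.
      split.
      + apply: disjU; first exact: disj_sub DP _ P2P.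
        by rewrite setIC; exact: disj_sub PQ P2P Q1Q.
      + apply: disjU; first exact: disj_sub DQ _ Q2Q.
        exact: disjD.
      + exact: disj_sub PQ P2P Q2Q.
    split.
      move=> nu lnu; have gnu := gl _ lnu; have [h1 h2 h3] := hnu _ lnu.
      rewrite gnu.1 // (good_D gnu mP mP1 P1P) (good_D gnu mQ mQ1 Q1Q) hP1 // hQ1 // h3 -h1 h2 !wS.
      split; by field.
    split; first by rewrite gg.1 // ; move: hg; lra.
    have h := betw_sub (g (hv Q)) (betw_split hb (negbT hw)).
    by apply: (betw_eq _ _ h); rewrite ?gQ2; ring.
set Dn := fun n => (st n).1.1.1.
have mDn : forall n, measurable (Dn n) by move=> n; move: (inv n) => /= [[]].
have incD : forall n, Dn n `<=` Dn n.+1.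
  by move=> n x; rewrite /Dn /=; case: ifP => _ /=; left.
exists (\bigcup_n Dn n); split.
- exact: bigcup_measurable.
- by move=> x [n _]; move: (inv n) => /= [[_ _ _ h _] _]; apply: h.
move=> nu [<-|lnu].
  apply: (conv_uniq (conv_good gg mDn incD)).
  move=> e e0; have e20 : 0 < e / 2 by rewrite divr_gt0.
  have [del del0 hdel] := gg.2 _ e20.
  have [N hN] := conv_geo (mm E) del0.
  exists N => n Nn; move: (inv n) => /= [[_ mP mQ _ _] [_ [hnu [hg hb]]]].
  have [h1 h2 _] := hnu _ lmm.
  have hle : w n.+1 * mm E <= w n * mm E.
    by rewrite wS ler_wpM2r ?mm_ge0 //; have := w0 n; lra.
  have hP : mm (st n).1.1.2 < del.
    rewrite h2; apply: le_lt_trans hle _; have := hN n Nn; rewrite subr0.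
    by apply: le_lt_trans; exact: ler_norm.
  have hQ : mm (st n).1.2 < del by rewrite -h1.
  have := hdel _ mP hP; have := hdel _ mQ hQ; have := betw_norm hb.
  rewrite /Dn (_ : g (st n).1.1.1 - 2^-1 * g E = - (st n).2); last by move: hg; lra.
  rewrite normrN; lra.
apply: (conv_uniq (conv_good (gl _ lnu) mDn incD)).
apply: (conv_squeeze (conv_geo `|nu E|)) => n.
move: (inv n) => /= [_ [_ [hnu _]]]; have [_ h2 h3] := hnu _ lnu.
rewrite /Dn h3 h2 (_ : 2^-1 * nu E - w n.+1 * nu E - 2^-1 * nu E = - (w n.+1 * nu E)); last by ring.
rewrite normrN normrM (ger0_norm (w0 _)) ler_wpM2r // wS -/(w n); have := w0 n; lra.
Qed.

End Step.
Section Lyap.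
Local Set Implicit Arguments.
Local Unset Strict Implicit.
Context d (T : measurableType d) (R : realType) (mu : probability T R).
Local Notation mm := (@mm d T R mu).
Context (nonat : nonatomic mu).

Lemma halv_all l : (forall nu, List.In nu l -> good mu nu) -> halvable (mm :: l).
Proof.
elim: l => [|g l IH] hl.
  move=> E mE; have [F [mF FE hF]] := sierpinski nonat mE.
  by exists F; split => // nu [<-|[]].
have gl : forall nu, List.In nu (mm :: l) -> good mu nu.
  by move=> nu [<-|lnu]; [exact: good_mm | apply: hl; right].
have h := halv_step (IH (fun nu lnu => hl nu (or_intror lnu))) gl (or_introl erefl)
  (hl g (or_introl erefl)).
apply: halv_sub h => nu /= [<-|[<-|lnu]]; [right; left | left | right; right] => //.
Qed.

Lemma lyap l : (forall nu, List.In nu l -> good mu nu) -> forall t, 0 <= t <= 1 ->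
  exists A, measurable A /\ forall nu, List.In nu l -> nu A = t * nu setT.
Proof.
move=> hl t t01.
have gl : forall nu, List.In nu (mm :: l) -> good mu nu.
  by move=> nu [<-|lnu]; [exact: good_mm | exact: hl].
have [A [mA _ hA]] := chain (halv_all hl) gl measurableT t01.
by exists A; split => // nu lnu; apply: hA; right.
Qed.

Lemma mix (f f1 f2 : T -> R) (S A : set T) (t : R) :
  mu.-integrable setT (EFin \o f) -> mu.-integrable setT (EFin \o f1) ->
  mu.-integrable setT (EFin \o f2) -> measurable S -> measurable A ->
  (forall x, A x -> f x = f1 x) -> (forall x, ~ A x -> f x = f2 x) ->
  Rintegral mu (A `&` S) f1 = t * Rintegral mu (setT `&` S) f1 ->
  Rintegral mu (A `&` S) f2 = t * Rintegral mu (setT `&` S) f2 ->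
  Rintegral mu S f = t * Rintegral mu S f1 + (1 - t) * Rintegral mu S f2.
Proof.
move=> i i1 i2 mS mA e1 e2 h1 h2.
have g2 := good_int i2 mS.
have hD := good_D g2 measurableT mA (@subsetT _ A).
rewrite setTD /= in hD.
rewrite setTI in h1 h2.
have -> : S = (A `&` S) `|` (~` A `&` S) by rewrite -setIUl setUv setTI.
have mAS : measurable (A `&` S) by exact: measurableI.
have mCS : measurable (~` A `&` S) by apply: measurableI => //; exact: measurableC.
rewrite Rintegral_setU //; last 2 first.
- rewrite -setIUl setUv setTI; exact: integrableS i.
- by apply/eqP; rewrite setIACA setICr set0I.
rewrite -(setIUl A (~` A) S) setUv setTI.
have -> : Rintegral mu (A `&` S) f = Rintegral mu (A `&` S) f1.
  by apply: eq_Rintegral => x; rewrite inE => -[/e1].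
have -> : Rintegral mu (~` A `&` S) f = Rintegral mu (~` A `&` S) f2.
  by apply: eq_Rintegral => x; rewrite inE => -[/e2].
rewrite hD setTI h1 h2; ring.
Qed.

End Lyap.
Lemma in_seq_In (X : eqType) (x : X) (s : seq X) : x \in s -> List.In x s.
Proof.
elim: s => [|y s IH] //; rewrite inE => /orP [/eqP ->|/IH h]; [left|right] => //.
Qed.

Theorem lemma1 (d : measure_display) (T : measurableType d) (R : realType)
  (L : nat) (hL : (0 < L)%N) (mu : probability T R) (Pmax : R) (hPmax : 0 < Pmax)
  (sigma : T -> 'I_L -> bool)
  (hsigma : forall i : 'I_L, measurable [set h | sigma h i])
  (hrho : forall i : 'I_L, (0 < mu [set h | sigma h i])%E)
  (f0 : ('I_L -> R) -> T -> 'I_L -> R) (fc : 'I_L -> ('I_L -> R) -> T -> R)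
  (g : ('I_L -> R) -> R) (c : 'I_L -> R) (hc : forall i, 0 <= c i)
  (hint0 : forall p, feasible Pmax sigma p -> forall i : 'I_L,
      mu.-integrable setT (fun h => (f0 (p h) h i)%:E))
  (hintc : forall p, feasible Pmax sigma p -> forall i : 'I_L,
      mu.-integrable setT (fun h => (fc i (p h) h)%:E))
  (AS1 : nonatomic mu)
  (AS2 : concave_vec g /\ nondecreasing_vec g) :
  convex_vset (regionC mu Pmax sigma f0 fc g c).
Proof.
move=> x y t [p1 [hp1 hx0 hx]] [p2 [hp2 hy0 hy]] t01.
have [t0 t1] : 0 <= t /\ t <= 1 by move/andP: t01.
pose S i := [set h | sigma h i].
pose a i := fun B => Rintegral mu (B `&` setT) (fun h => f0 (p1 h) h i).
pose b i := fun B => Rintegral mu (B `&` setT) (fun h => f0 (p2 h) h i).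
pose cc i := fun B => Rintegral mu (B `&` S i) (fun h => fc i (p1 h) h).
pose dd i := fun B => Rintegral mu (B `&` S i) (fun h => fc i (p2 h) h).
pose l := List.flat_map (fun i => [:: a i; b i; cc i; dd i]) (enum 'I_L).
have gl : forall nu, List.In nu l -> good mu nu.
  move=> nu /List.in_flat_map [i [_ hi]].
  move: hi => /= [<-|[<-|[<-|[<-|[]]]]]; apply: good_int => //;
    first [exact: hint0 | exact: hintc | exact: hsigma].
have [A [mA hA]] := lyap AS1 gl t01.
have inl : forall nu i, List.In nu [:: a i; b i; cc i; dd i] -> List.In nu l.
  move=> nu i h; apply/List.in_flat_map; exists i; split => //.
  by apply: in_seq_In; rewrite mem_enum.
have hAa : forall i, a i A = t * a i setT by move=> i; apply/hA/(inl _ i); left.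
have hAb : forall i, b i A = t * b i setT by move=> i; apply/hA/(inl _ i); right; left.
have hAc : forall i, cc i A = t * cc i setT by move=> i; apply/hA/(inl _ i); right; right; left.
have hAd : forall i, dd i A = t * dd i setT by move=> i; apply/hA/(inl _ i); right; right; right; left.
pose p := fun h i => if h \in A then p1 h i else p2 h i.
have pE1 : forall h, A h -> p h = p1 h by move=> h Ah; apply/funext => i; rewrite /p mem_set.
have pE2 : forall h, ~ A h -> p h = p2 h by move=> h Ah; apply/funext => i; rewrite /p memNset.
have [mp1 bp1 sp1] := hp1.
have [mp2 bp2 sp2] := hp2.
have hp : feasible Pmax sigma p.
  split.
  - move=> i.
    have -> : (fun h => p h i) = (fun h => \1_A h * p1 h i + (1 - \1_A h) * p2 h i).
      apply/funext => h; rewrite /p indicE; case: (h \in A) => /=.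
        by rewrite mul1r subrr mul0r addr0.
      by rewrite mul0r subr0 mul1r add0r.
    apply: measurable_realfun.measurable_funD; apply: measurable_realfun.measurable_funM => //;
      first [exact: measurable_realfun.measurable_indic | exact: mp1 | exact: mp2 |
        (apply: measurable_realfun.measurable_funB => //; exact: measurable_realfun.measurable_indic)].
  - by move=> h i; rewrite /p; case: ifP => _; [exact: bp1 | exact: bp2].
  - by move=> h i; rewrite /p; case: ifP => _; [exact: sp1 | exact: sp2].
exists p; split => //.
- rewrite /vobj.
  have -> : (fun i => Rintegral mu setT (fun h => f0 (p h) h i)) =
      (fun i => t * Rintegral mu setT (fun h => f0 (p1 h) h i) +
                (1 - t) * Rintegral mu setT (fun h => f0 (p2 h) h i)).
    apply/funext => i; apply: (mix (S := setT) (A := A) (t := t)) => //.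
    + exact: hint0.
    + exact: hint0.
    + exact: hint0.
    + by move=> h /pE1 ->.
    + by move=> h /pE2 ->.
    + exact: hAa.
    + exact: hAb.
  apply: le_trans (AS2.1 _ _ _ t01) => /=.
  have t1' : 0 <= 1 - t by rewrite subr_ge0.
  by apply: lerD; apply: ler_wpM2l.
- move=> i /=; rewrite /ucon.
  rewrite (mix (f1 := fun h => fc i (p1 h) h) (f2 := fun h => fc i (p2 h) h) (A := A) (t := t));
    last 9 first.
  + exact: hintc.
  + exact: hintc.
  + exact: hintc.
  + exact: hsigma.
  + exact: mA.
  + by move=> h /pE1 ->.
  + by move=> h /pE2 ->.
  + exact: hAc.
  + exact: hAd.
  have h1 := hx i; have h2 := hy i; rewrite /ucon in h1 h2.
  set r := (fine (mu [set h | sigma h i]))^-1 in h1 h2 *.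
  set U1 := Rintegral _ _ _ in h1 *.
  set U2 := Rintegral _ _ _ in h2 *.
  have t1' : 0 <= 1 - t by rewrite subr_ge0.
  have k1 := ler_wpM2l t0 h1; have k2 := ler_wpM2l t1' h2.
  have hc' := hc i.
  rewrite (_ : r * (t * U1 + (1 - t) * U2) = t * (r * U1) + (1 - t) * (r * U2)); last by ring.
  lra.
Qed.
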